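(* Let $d$ be a pseudo-metric on $[0,1]$ and $\Psi:\mathbb R_+\to\mathbb R_+$ continuous, strictly increasing with $\Psi(0)=0$, such that $F(1):=\mathcal V(\Psi,d)<\infty$. Then $$N([0,1],d,\varepsilon)\le\frac{4F(1)}{\Psi(\varepsilon)}\qquad\text{for all }0<\varepsilon<\Psi^{-1}(F(1)).$$ More generally, with $F(t)=\sup\sum_{i=1}^n\Psi(d(t_i,t_{i-1}))$ over partitions $0=t_0<\dots<t_n=t$, for every $m\in\mathbb Z$ and integer $j\ge1$ the set $S_{m,j}=\{s\in[0,1]:F(s)\in((j-1)2^{-m},j2^{-m}]\}$ satisfies $N(S_{m,j},d,\varepsilon)\le 2^{-m+2}/\Psi(\varepsilon)$ for $0<\varepsilon<\Psi^{-1}(2^{-m})$.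
   Context: $\mathcal V(\Psi,d)=\sup\sum_{i=1}^n\Psi(d(t_i,t_{i-1}))$ over all partitions $0=t_0<\dots<t_n=1$. For $A\subset[0,1]$, $N(A,d,\varepsilon)$ is the smallest number of open $d$-balls of radius $\varepsilon$ (centred in $A$) covering $A$. *)

(* Defs.v *)
From Stdlib Require Import Reals Lra List.
Open Scope R_scope.

Definition in01 (x : R) : Prop := 0 <= x <= 1.

Definition pseudo_metric01 (d : R -> R -> R) : Prop :=
  (forall x y, in01 x -> in01 y -> 0 <= d x y) /\
  (forall x, in01 x -> d x x = 0) /\
  (forall x y, in01 x -> in01 y -> d x y = d y x) /\
  (forall x y z, in01 x -> in01 y -> in01 z -> d x z <= d x y + d y z).

Definition nonneg (x : R) : Prop := 0 <= x.

Definition admissible_Psi (Psi : R -> R) : Prop :=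
  (forall x, 0 <= x -> 0 <= Psi x) /\
  (forall x, 0 <= x -> continue_in Psi nonneg x) /\
  (forall x y, 0 <= x -> x < y -> Psi x < Psi y) /\
  Psi 0 = 0.

Definition is_partition (t : nat -> R) (n : nat) (T : R) : Prop :=
  t O = 0 /\ t n = T /\ (forall i, (i < n)%nat -> t i < t (S i)).

Fixpoint var_sum (Psi : R -> R) (d : R -> R -> R) (t : nat -> R) (n : nat) : R :=
  match n with
  | O => 0
  | S k => var_sum Psi d t k + Psi (d (t (S k)) (t k))
  end.

Definition var_sums (Psi : R -> R) (d : R -> R -> R) (T : R) (v : R) : Prop :=
  exists t n, is_partition t n T /\ v = var_sum Psi d t n.

Definition is_variation (Psi : R -> R) (d : R -> R -> R) (T v : R) : Prop :=
  is_lub (var_sums Psi d T) v.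

Definition is_cover (A : R -> Prop) (d : R -> R -> R) (eps : R) (c : list R) : Prop :=
  (forall x, In x c -> A x) /\
  (forall a, A a -> exists x, In x c /\ d x a < eps).

Definition covering_number (A : R -> Prop) (d : R -> R -> R) (eps : R) (n : nat) : Prop :=
  (exists c, is_cover A d eps c /\ length c = n) /\
  (forall c, is_cover A d eps c -> (n <= length c)%nat).

Definition S_mj (F : R -> R) (m : Z) (j : nat) (s : R) : Prop :=
  in01 s /\ (INR j - 1) * powerRZ 2 (- m) < F s /\ F s <= INR j * powerRZ 2 (- m).

(* Main.v *)
Require Import Defs.
From Stdlib Require Import Reals Lra List Lia Classical ZArith.
Open Scope R_scope.

Lemma var_sum_ext Psi d t1 t2 n :
  (forall i, (i <= n)%nat -> t1 i = t2 i) -> var_sum Psi d t1 n = var_sum Psi d t2 n.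
Proof.
  induction n; intros H; simpl; auto.
  rewrite IHn by (intros; apply H; lia). rewrite (H (S n)) by lia. rewrite (H n) by lia. auto.
Qed.

Lemma extend_sum Psi d s t v : s < t -> var_sums Psi d s v -> var_sums Psi d t (v + Psi (d t s)).
Proof.
  intros Hst [tt [n [[H0 [Hn Hi]] Hv]]].
  exists (fun i => if (i <=? n)%nat then tt i else t), (S n). split; [split; [|split]|].
  - simpl. auto.
  - replace (S n <=? n)%nat with false; auto. symmetry; apply Nat.leb_gt; lia.
  - intros i Hi'. destruct (Nat.eq_dec i n).
    + subst i. rewrite Nat.leb_refl. replace (S n <=? n)%nat with false by (symmetry; apply Nat.leb_gt; lia).
      rewrite Hn; auto.
    + replace (i <=? n)%nat with true by (symmetry; apply Nat.leb_le; lia).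
      replace (S i <=? n)%nat with true by (symmetry; apply Nat.leb_le; lia). apply Hi; lia.
  - cbn [var_sum]. rewrite Nat.leb_refl. replace (S n <=? n)%nat with false by (symmetry; apply Nat.leb_gt; lia).
    rewrite (var_sum_ext Psi d _ tt n). rewrite Hv, Hn; auto.
    all: try (intros i Hi'; replace (i <=? n)%nat with true by (symmetry; apply Nat.leb_le; lia); auto).
Qed.

Lemma F_mono d Psi F (HF : forall t, in01 t -> is_variation Psi d t (F t)) s t :
  in01 s -> in01 t -> s < t -> F s + Psi (d t s) <= F t.
Proof.
  intros Hs Ht Hst.
  destruct (HF s Hs) as [_ Hlub]. destruct (HF t Ht) as [Hub _].
  assert (F s <= F t - Psi (d t s)); [|lra].
  apply Hlub. intros v Hv. apply extend_sum with (t := t) in Hv; auto.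
  apply Hub in Hv. lra.
Qed.

Lemma F0_nonneg d Psi F (HF : forall t, in01 t -> is_variation Psi d t (F t)) : 0 <= F 0.
Proof.
  destruct (HF 0) as [Hub _]. unfold in01; lra.
  apply Hub. exists (fun _ => 0), O. split; [split; [|split]|]; simpl; auto.
  intros; lia.
Qed.

Lemma close_pts d Psi F (Hd : pseudo_metric01 d) (HPsi : admissible_Psi Psi)
  (HF : forall t, in01 t -> is_variation Psi d t (F t)) eps s t :
  0 < eps -> in01 s -> in01 t -> Rabs (F s - F t) < Psi eps -> d s t < eps.
Proof.
  intros He Hs Ht Hab. destruct Hd as [Hd0 [Hdd [Hsym _]]].
  destruct HPsi as [_ [_ [Hinc _]]].
  destruct (Rtotal_order s t) as [Hlt|[Heq|Hgt]].
  - pose proof (F_mono d Psi F HF s t Hs Ht Hlt).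
    rewrite Hsym by auto.
    destruct (Rlt_or_le (d t s) eps) as [|Hge]; auto.
    exfalso. assert (Psi eps <= Psi (d t s)).
    { destruct Hge as [Hg|Hg]. left; apply Hinc; lra. rewrite Hg; lra. }
    apply Rabs_def2 in Hab. lra.
  - subst. rewrite Hdd; auto.
  - pose proof (F_mono d Psi F HF t s Ht Hs Hgt).
    destruct (Rlt_or_le (d s t) eps) as [|Hge]; auto.
    exfalso. assert (Psi eps <= Psi (d s t)).
    { destruct Hge as [Hg|Hg]. left; apply Hinc; lra. rewrite Hg; lra. }
    apply Rabs_def2 in Hab. lra.
Qed.

Lemma bucket d Psi F (Hd : pseudo_metric01 d) (HPsi : admissible_Psi Psi)
  (HF : forall t, in01 t -> is_variation Psi d t (F t)) eps lo (He : 0 < eps) :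
  forall N (A : R -> Prop), (forall a, A a -> in01 a /\ lo <= F a < lo + INR N * Psi eps) ->
  exists c, is_cover A d eps c /\ (length c <= N)%nat.
Proof.
  induction N; intros A HA.
  - exists nil. split; [split|]; simpl; auto.
    + intros x [].
    + intros a Ha. apply HA in Ha. simpl in Ha. lra.
  - destruct (IHN (fun a => A a /\ F a < lo + INR N * Psi eps)) as [c1 [[Hc1 Hc2] Hl]].
    { intros a [Ha Hlt]. apply HA in Ha. destruct Ha as [Ha1 Ha2]. split; [auto|lra]. }
    destruct (classic (exists x, A x /\ lo + INR N * Psi eps <= F x)) as [[x [Hx Hxf]]|Hno].
    + exists (x :: c1). split; [split|]; simpl; try lia.
      * intros y [<-|Hy]; auto. apply Hc1 in Hy. tauto.
      * intros a Ha. destruct (Rlt_or_le (F a) (lo + INR N * Psi eps)).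
        -- destruct (Hc2 a (conj Ha H)) as [y [Hy Hdy]]. eauto.
        -- exists x. split; auto. apply HA in Ha. apply HA in Hx.
           rewrite S_INR in Ha, Hx.
           apply (close_pts d Psi F Hd HPsi HF); try tauto.
           apply Rabs_def1; lra.
    + exists c1. split; [split|]; try lia.
      * intros y Hy. apply Hc1 in Hy. tauto.
      * intros a Ha. apply Hc2. split; auto.
        destruct (Rlt_or_le (F a) (lo + INR N * Psi eps)); auto.
        exfalso. apply Hno. eauto.
Qed.

Lemma minimal_nat (P : nat -> Prop) k : P k -> exists n, P n /\ forall m, P m -> (n <= m)%nat.
Proof.
  revert k. induction k as [k IH] using (well_founded_induction lt_wf). intros Hk.
  destruct (classic (exists m, (m < k)%nat /\ P m)) as [[m [Hm Pm]]|Hno].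
  - eapply IH; eauto.
  - exists k. split; auto. intros m Pm. destruct (Nat.lt_ge_cases m k); auto.
    exfalso; eauto.
Qed.

Lemma nat_above r : 0 <= r -> exists N : nat, r < INR N <= r + 1.
Proof.
  intros Hr. destruct (archimed r) as [H1 H2].
  assert (Hz : (0 <= up r)%Z). { apply le_IZR. lra. }
  exists (Z.to_nat (up r)). rewrite INR_IZR_INZ, Z2Nat.id by auto. lra.
Qed.

Lemma general d Psi F (Hd : pseudo_metric01 d) (HPsi : admissible_Psi Psi)
  (HF : forall t, in01 t -> is_variation Psi d t (F t)) eps lo L (A : R -> Prop) :
  0 < eps -> Psi eps <= L ->
  (forall a, A a -> in01 a /\ lo <= F a <= lo + L) ->
  exists n, covering_number A d eps n /\ INR n <= 2 * L / Psi eps.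
Proof.
  intros He HL HA.
  assert (Hp : 0 < Psi eps).
  { destruct HPsi as [_ [_ [Hinc H0]]]. rewrite <- H0. apply Hinc; lra. }
  destruct (nat_above (L / Psi eps)) as [N [HN1 HN2]].
  { unfold Rdiv; apply Rmult_le_pos; [lra|left; apply Rinv_0_lt_compat; auto]. }
  assert (HNd : L < INR N * Psi eps).
  { apply Rmult_lt_compat_r with (r := Psi eps) in HN1; auto.
    unfold Rdiv in HN1. rewrite Rmult_assoc, Rinv_l in HN1; lra. }
  destruct (bucket d Psi F Hd HPsi HF eps lo He N A) as [c [Hc Hl]].
  { intros a Ha. apply HA in Ha. destruct Ha as [Ha1 Ha2]. split; [auto|lra]. }
  destruct (minimal_nat (fun k => exists c, is_cover A d eps c /\ length c = k) (length c))
    as [n [[c' [Hc' Hl']] Hmin]]; eauto.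
  exists n. split. split; eauto.
  apply le_INR in Hl.
  assert (INR n <= INR (length c)). { apply le_INR. apply Hmin. eauto. }
  assert (1 <= L / Psi eps).
  { apply Rmult_le_reg_r with (Psi eps); auto. unfold Rdiv. rewrite Rmult_assoc, Rinv_l; lra. }
  unfold Rdiv in *. lra.
Qed.

Theorem mainTheorem12 (d : R -> R -> R) (Psi : R -> R) (F : R -> R)
  (Hd : pseudo_metric01 d) (HPsi : admissible_Psi Psi)
  (HF : forall t, in01 t -> is_variation Psi d t (F t)) :
  (forall eps, 0 < eps -> Psi eps < F 1 ->
     exists n, covering_number in01 d eps n /\ INR n <= 4 * F 1 / Psi eps) /\
  (forall (m : Z) (j : nat), (1 <= j)%nat ->
     forall eps, 0 < eps -> Psi eps < powerRZ 2 (- m) ->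
     exists n, covering_number (S_mj F m j) d eps n /\
               INR n <= powerRZ 2 (- m + 2) / Psi eps).
Proof.
  assert (Hp : forall eps, 0 < eps -> 0 < Psi eps).
  { intros eps He. destruct HPsi as [_ [_ [Hinc H0]]]. rewrite <- H0. apply Hinc; lra. }
  split.
  - intros eps He Hlt.
    destruct (general d Psi F Hd HPsi HF eps 0 (F 1) in01) as [n [Hn Hb]]; try lra.
    + intros a Ha. split; auto. pose proof (F0_nonneg d Psi F HF).
      destruct Ha as [Ha0 Ha1]. split.
      * destruct Ha0 as [Ha0| <-]; [|lra].
        pose proof (F_mono d Psi F HF 0 a). destruct Hd as [Hd0 _].
        assert (0 <= Psi (d a 0)).
        { destruct HPsi as [HP _]. apply HP, Hd0; unfold in01; lra. }
        assert (F 0 + Psi (d a 0) <= F a) by (apply H0; unfold in01; lra). lra.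
      * destruct Ha1 as [Ha1| ->]; [|lra].
        pose proof (F_mono d Psi F HF a 1). destruct Hd as [Hd0 _].
        assert (0 <= Psi (d 1 a)).
        { destruct HPsi as [HP _]. apply HP, Hd0; unfold in01; lra. }
        assert (F a + Psi (d 1 a) <= F 1) by (apply H0; unfold in01; lra). lra.
    + exists n. split; auto. pose proof (Hp eps He). unfold Rdiv in *.
      assert (0 <= F 1 * / Psi eps).
      { apply Rmult_le_pos; [lra|]. left; apply Rinv_0_lt_compat; auto. }
      lra.
  - intros m j Hj eps He Hlt.
    destruct (general d Psi F Hd HPsi HF eps ((INR j - 1) * powerRZ 2 (- m))
                (powerRZ 2 (-m)) (S_mj F m j)) as [n [Hn Hb]]; try lra.
    + intros a [Ha [H1 H2]]. split; auto. lra.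
    + exists n. split; auto.
      rewrite powerRZ_add by lra.
      replace (powerRZ 2 2) with 4 by (simpl; lra).
      pose proof (Hp eps He). pose proof (powerRZ_lt 2 (-m) ltac:(lra)).
      unfold Rdiv in *.
      assert (0 <= powerRZ 2 (- m) * / Psi eps).
      { apply Rmult_le_pos; [lra|]. left; apply Rinv_0_lt_compat; auto. }
      lra.
Qed.
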